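(* No twisted differential operator is globally hypo-elliptic.
   Context: $D_x=-\mathrm i\partial_x$, $D_y=-\mathrm i\partial_y$, $M_x,M_y$ multiplication by $x,y$ on $\mathbb R^2$. A twisted differential operator of order $m$ is $A=\sum_{j+k\le m}(-1)^{j+k}a_{kj}(\alpha D_y-\beta M_x)^j(\gamma D_x-\delta M_y)^k$ with $\alpha,\beta,\gamma,\delta\in\mathbb R$, $\alpha\delta-\beta\gamma=1$, $\beta\delta\ne0$, $a_{kj}\in\mathbb C$, $\sum_{j+k=m}|a_{kj}|\ne0$. The symbol of a differential operator written as $\sum_{|\alpha|\le m}a_\alpha(x)D^\alpha$ (coefficients to the left, $D_j=-\mathrm i\partial_j$) is $a(x,\xi)=\sum_{|\alpha|\le m}a_\alpha(x)\xi^\alpha$. An operator on $\mathcal S'(\mathbb R^n)$ with polynomial symbol $a(x,\xi)$ is globally hypo-elliptic if $a$ does not vanish outside a compact subset of $\mathbb R^{2n}$ and $\lim_{|x|+|\xi|\to\infty}\partial_x^\alpha\partial_\xi^\beta a(x,\xi)/a(x,\xi)=0$ for all $|\alpha|+|\beta|=1$. *)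

(* Defs.v *)
From Stdlib Require Import Reals ClassicalEpsilon List.
Open Scope R_scope.

Definition Cx := (R * R)%type.
Definition C0 : Cx := (0, 0).
Definition CR (r : R) : Cx := (r, 0).
Definition Ci : Cx := (0, 1).
Definition Cadd (a b : Cx) : Cx := (fst a + fst b, snd a + snd b).
Definition Cmul (a b : Cx) : Cx :=
  (fst a * fst b - snd a * snd b, fst a * snd b + snd a * fst b).
Definition Cnorm (a : Cx) : R := sqrt (fst a ^ 2 + snd a ^ 2).
Definition Cinv (a : Cx) : Cx :=
  let n2 := fst a ^ 2 + snd a ^ 2 in (fst a / n2, - snd a / n2).
Definition Cdiv (a b : Cx) : Cx := Cmul a (Cinv b).
Definition Cpow (a : Cx) (n : nat) : Cx := Nat.iter n (Cmul a) (CR 1).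

Fixpoint sumC (n : nat) (g : nat -> Cx) : Cx :=
  match n with O => C0 | S n' => Cadd (sumC n' g) (g n') end.

(** * Derivatives (total, via choice; equal to the derivative when it exists) *)
Definition rderiv (g : R -> R) (t : R) : R :=
  epsilon (inhabits 0) (fun l => derivable_pt_lim g t l).
Definition cderiv (g : R -> Cx) (t : R) : Cx :=
  (rderiv (fun s => fst (g s)) t, rderiv (fun s => snd (g s)) t).
Definition cderivable (g : R -> Cx) (t : R) : Prop :=
  (exists l, derivable_pt_lim (fun s => fst (g s)) t l) /\
  (exists l, derivable_pt_lim (fun s => snd (g s)) t l).

Definition Fn := R -> R -> Cx.
Definition pdx (f : Fn) : Fn := fun x y => cderiv (fun t => f t y) x.
Definition pdy (f : Fn) : Fn := fun x y => cderiv (fun t => f x t) y.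
Definition mI : Cx := (0, -1).
Definition Dx (f : Fn) : Fn := fun x y => Cmul mI (pdx f x y).
Definition Dy (f : Fn) : Fn := fun x y => Cmul mI (pdy f x y).
Definition Mx (f : Fn) : Fn := fun x y => Cmul (CR x) (f x y).
Definition My (f : Fn) : Fn := fun x y => Cmul (CR y) (f x y).

Definition iter_pd (w : list bool) (f : Fn) : Fn :=
  fold_right (fun (b : bool) g => if b then pdx g else pdy g) f w.
Definition smooth (f : Fn) : Prop :=
  forall (w : list bool) (x y : R),
    cderivable (fun t => iter_pd w f t y) x /\ cderivable (fun t => iter_pd w f x t) y.

(** * Twisted differential operators
    A = sum_{j+k<=m} (-1)^(j+k) a_{kj} (al D_y - be M_x)^j (ga D_x - de M_y)^k,
    with the coefficient a_{kj} written [a k j]. *)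
Definition Pop (al be : R) (g : Fn) : Fn :=
  fun x y => Cadd (Cmul (CR al) (Dy g x y)) (Cmul (CR (- be)) (Mx g x y)).
Definition Qop (ga de : R) (g : Fn) : Fn :=
  fun x y => Cadd (Cmul (CR ga) (Dx g x y)) (Cmul (CR (- de)) (My g x y)).

Definition twisted (al be ga de : R) (a : nat -> nat -> Cx) (m : nat) (f : Fn) : Fn :=
  fun x y =>
    sumC (S m) (fun j => sumC (S (m - j)) (fun k =>
      Cmul (Cmul (CR ((-1) ^ (j + k))) (a k j))
           (Nat.iter j (Pop al be) (Nat.iter k (Qop ga de) f) x y))).

Definition twisted_data (al be ga de : R) (a : nat -> nat -> Cx) (m : nat) : Prop :=
  al * de - be * ga = 1 /\ be * de <> 0 /\
  (exists j, (j <= m)%nat /\ a (m - j)%nat j <> C0).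

(** * Differential operators with polynomial coefficients, written with the
    coefficients on the left:
      sum_{p,q,r,s <= N} c p q r s  x^p y^q  D_x^r D_y^s,
    i.e. sum_alpha a_alpha(x) D^alpha with a_(r,s)(x,y) = sum_{p,q} c p q r s x^p y^q. *)
Definition sum4 (N : nat) (g : nat -> nat -> nat -> nat -> Cx) : Cx :=
  sumC (S N) (fun p => sumC (S N) (fun q => sumC (S N) (fun r => sumC (S N)
    (fun s => g p q r s)))).

Definition polyop (N : nat) (c : nat -> nat -> nat -> nat -> Cx) (f : Fn) : Fn :=
  fun x y => sum4 N (fun p q r s =>
    Cmul (Cmul (c p q r s) (CR (x ^ p * y ^ q)))
         (Nat.iter r Dx (Nat.iter s Dy f) x y)).

Definition symbol (N : nat) (c : nat -> nat -> nat -> nat -> Cx)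
  : R -> R -> R -> R -> Cx :=
  fun x y xi eta => sum4 N (fun p q r s =>
    Cmul (c p q r s) (CR (x ^ p * y ^ q * xi ^ r * eta ^ s))).

Definition nrm4 (x y xi eta : R) : R :=
  sqrt (x ^ 2 + y ^ 2) + sqrt (xi ^ 2 + eta ^ 2).

Definition Sym := R -> R -> R -> R -> Cx.
Definition pd1 (a : Sym) : Sym := fun x y u v => cderiv (fun t => a t y u v) x.
Definition pd2 (a : Sym) : Sym := fun x y u v => cderiv (fun t => a x t u v) y.
Definition pd3 (a : Sym) : Sym := fun x y u v => cderiv (fun t => a x y t v) u.
Definition pd4 (a : Sym) : Sym := fun x y u v => cderiv (fun t => a x y u t) v.

Definition glob_hypoell (a : Sym) : Prop :=
  (* a does not vanish outside a compact (= closed bounded) set *)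
  (exists R0 : R, forall x y u v, nrm4 x y u v > R0 -> a x y u v <> C0) /\
  (forall d : Sym -> Sym, In d (pd1 :: pd2 :: pd3 :: pd4 :: nil) ->
     forall eps : R, eps > 0 -> exists R1 : R, forall x y u v,
       nrm4 x y u v > R1 -> Cnorm (Cdiv (d a x y u v) (a x y u v)) < eps).

(* Main.v *)
From Stdlib Require Import Bool Reals Lra Lia List FunctionalExtensionality ClassicalEpsilon Classical.
Require Import Defs.
Open Scope R_scope.

Ltac cxd := repeat match goal with | c : Cx |- _ => let a := fresh "a" in let b := fresh "b" in destruct c as [a b] end.
Lemma Cx_ext (a b : Cx) : fst a = fst b -> snd a = snd b -> a = b.
Proof. destruct a, b; simpl; intros; subst; auto. Qed.
Ltac cxs := cxd; apply Cx_ext; unfold Cadd, Cmul, CR, C0, mI; simpl; ring.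

Lemma D_ext f g x l : (forall t, f t = g t) -> derivable_pt_lim f x l -> derivable_pt_lim g x l.
Proof. intros H; replace g with f by (apply functional_extensionality; auto); auto. Qed.
Lemma D_eqv f x l l' : derivable_pt_lim f x l -> l = l' -> derivable_pt_lim f x l'.
Proof. intros; subst; auto. Qed.
Lemma D_plus f g x a b : derivable_pt_lim f x a -> derivable_pt_lim g x b ->
  derivable_pt_lim (fun t => f t + g t) x (a + b).
Proof. intros; exact (derivable_pt_lim_plus f g x a b H H0). Qed.
Lemma D_minus f g x a b : derivable_pt_lim f x a -> derivable_pt_lim g x b ->
  derivable_pt_lim (fun t => f t - g t) x (a - b).
Proof. intros; exact (derivable_pt_lim_minus f g x a b H H0). Qed.
Lemma D_mult f g x a b : derivable_pt_lim f x a -> derivable_pt_lim g x b ->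
  derivable_pt_lim (fun t => f t * g t) x (a * g x + f x * b).
Proof. intros. eapply D_eqv. exact (derivable_pt_lim_mult f g x a b H H0). ring. Qed.
Lemma D_const k x : derivable_pt_lim (fun _ => k) x 0.
Proof. exact (derivable_pt_lim_const k x). Qed.
Lemma D_id x : derivable_pt_lim (fun t => t) x 1.
Proof. exact (derivable_pt_lim_id x). Qed.
Lemma D_pow f x a n : derivable_pt_lim f x a ->
  derivable_pt_lim (fun t => f t ^ n) x (INR n * a * f x ^ Init.Nat.pred n).
Proof. intros. eapply D_eqv. apply (derivable_pt_lim_comp f (fun y => y ^ n) x a).
  auto. apply derivable_pt_lim_pow. simpl; ring. Qed.
Lemma D_cos f x a : derivable_pt_lim f x a -> derivable_pt_lim (fun t => cos (f t)) x (- sin (f x) * a).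
Proof. intros. eapply D_eqv. apply (derivable_pt_lim_comp f cos x a). auto.
  apply derivable_pt_lim_cos. ring. Qed.
Lemma D_sin f x a : derivable_pt_lim f x a -> derivable_pt_lim (fun t => sin (f t)) x (cos (f x) * a).
Proof. intros. eapply D_eqv. apply (derivable_pt_lim_comp f sin x a). auto.
  apply derivable_pt_lim_sin. ring. Qed.
Lemma D_lin p q x : derivable_pt_lim (fun t => p + q * t) x q.
Proof. eapply D_eqv. apply D_plus. apply D_const. apply (D_mult (fun _ => q) (fun t => t)).
  apply D_const. apply D_id. ring. Qed.

Lemma rderiv_eq g t l : derivable_pt_lim g t l -> rderiv g t = l.
Proof. intros H. unfold rderiv.
  pose proof (epsilon_spec (inhabits 0) (fun l => derivable_pt_lim g t l) (ex_intro _ l H)) as H'.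
  eapply uniqueness_limite; eauto.
Qed.

Definition cdl (g : R -> Cx) t (l : Cx) :=
  derivable_pt_lim (fun s => fst (g s)) t (fst l) /\ derivable_pt_lim (fun s => snd (g s)) t (snd l).
Lemma cdl_cderiv g t l : cdl g t l -> cderiv g t = l.
Proof. intros [H1 H2]. unfold cderiv. rewrite (rderiv_eq _ _ _ H1), (rderiv_eq _ _ _ H2).
  destruct l; auto. Qed.
Lemma cdl_cderivable g t l : cdl g t l -> cderivable g t.
Proof. intros [H1 H2]; split; eauto. Qed.
Lemma cdl_eqv g t l l' : cdl g t l -> l = l' -> cdl g t l'.
Proof. intros; subst; auto. Qed.
Lemma cdl_add g h t a b : cdl g t a -> cdl h t b -> cdl (fun s => Cadd (g s) (h s)) t (Cadd a b).
Proof. intros [] []; split; simpl; apply D_plus; auto. Qed.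
Lemma cdl_mul g h t a b : cdl g t a -> cdl h t b ->
  cdl (fun s => Cmul (g s) (h s)) t (Cadd (Cmul a (h t)) (Cmul (g t) b)).
Proof. intros [] []; split; simpl.
  - eapply D_eqv. apply D_minus; apply D_mult; eauto. simpl. ring.
  - eapply D_eqv. apply D_plus; apply D_mult; eauto. simpl; ring.
Qed.
Lemma cdl_const k t : cdl (fun _ => k) t C0.
Proof. split; apply D_const. Qed.
Lemma cdl_real c r t r' : derivable_pt_lim r t r' -> cdl (fun s => Cmul c (CR (r s))) t (Cmul c (CR r')).
Proof. intros H; split; simpl.
  - eapply D_eqv. apply D_minus. apply (D_mult (fun _ => fst c)). apply D_const. eauto.
    apply (D_mult (fun _ => snd c)). apply D_const. apply D_const. simpl; ring.
  - eapply D_eqv. apply D_plus. apply (D_mult (fun _ => fst c)). apply D_const. apply D_const.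
    apply (D_mult (fun _ => snd c)). apply D_const. eauto. simpl; ring.
Qed.


Definition mono := (Cx * nat * nat)%type.
Fixpoint EvC (L : list mono) (u v : R) : Cx :=
  match L with nil => C0 | t :: L' =>
    Cadd (Cmul (fst (fst t)) (CR (u ^ snd (fst t) * v ^ snd t))) (EvC L' u v) end.
Definition mulU (L : list mono) := map (fun t : mono => (fst (fst t), S (snd (fst t)), snd t)) L.
Definition mulV (L : list mono) := map (fun t : mono => (fst (fst t), snd (fst t), S (snd t))) L.
Definition dU (L : list mono) := map (fun t : mono =>
  (Cmul (fst (fst t)) (CR (INR (snd (fst t)))), Init.Nat.pred (snd (fst t)), snd t)) L.
Definition dV (L : list mono) := map (fun t : mono =>
  (Cmul (fst (fst t)) (CR (INR (snd t))), snd (fst t), Init.Nat.pred (snd t))) L.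
Definition scl (k : Cx) (L : list mono) := map (fun t : mono => (Cmul k (fst (fst t)), snd (fst t), snd t)) L.

Lemma EvC_app L1 L2 u v : EvC (L1 ++ L2) u v = Cadd (EvC L1 u v) (EvC L2 u v).
Proof. induction L1; simpl. cxs. rewrite IHL1. cxs. Qed.
Lemma EvC_scl k L u v : EvC (scl k L) u v = Cmul k (EvC L u v).
Proof. induction L; simpl. cxs. rewrite IHL. cxs. Qed.
Lemma EvC_mulU L u v : EvC (mulU L) u v = Cmul (CR u) (EvC L u v).
Proof. induction L; simpl. cxs. fold (mulU L). rewrite IHL. cxs. Qed.
Lemma EvC_mulV L u v : EvC (mulV L) u v = Cmul (CR v) (EvC L u v).
Proof. induction L; simpl. cxs. fold (mulV L). rewrite IHL. cxs. Qed.

Lemma cdl_EvC_u L f v t0 f' : derivable_pt_lim f t0 f' ->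
  cdl (fun t => EvC L (f t) v) t0 (Cmul (CR f') (EvC (dU L) (f t0) v)).
Proof. intros Hf. induction L as [|[[c d] e] L IH]; simpl.
  - eapply cdl_eqv. apply cdl_const. cxs.
  - fold (dU L). eapply cdl_eqv. apply cdl_add; [|exact IH].
    apply cdl_real. apply (D_mult (fun s => f s ^ d) (fun _ => v ^ e)). apply D_pow; eauto. apply D_const.
    simpl. destruct d; simpl; cxs.
Qed.
Lemma cdl_EvC_v L f u t0 f' : derivable_pt_lim f t0 f' ->
  cdl (fun t => EvC L u (f t)) t0 (Cmul (CR f') (EvC (dV L) u (f t0))).
Proof. intros Hf. induction L as [|[[c d] e] L IH]; simpl.
  - eapply cdl_eqv. apply cdl_const. cxs.
  - fold (dV L). eapply cdl_eqv. apply cdl_add; [|exact IH].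
    apply cdl_real. apply (D_mult (fun _ => u ^ d) (fun s => f s ^ e)). apply D_const. apply D_pow; eauto.
    simpl. destruct e; simpl; cxs.
Qed.


Definition Ef (xi eta : R) : Fn := fun x y => (cos (x*xi + y*eta), sin (x*xi + y*eta)).
Lemma D_lin2 p q x : derivable_pt_lim (fun t => p - q * t) x (- q).
Proof. eapply D_eqv. apply D_minus. apply D_const. apply (D_mult (fun _ => q) (fun t => t)).
  apply D_const. apply D_id. ring. Qed.
Lemma cdl_Ex xi eta y t0 : cdl (fun t => Ef xi eta t y) t0 (Cmul (0, xi) (Ef xi eta t0 y)).
Proof. assert (H : derivable_pt_lim (fun t => t * xi + y * eta) t0 xi).
  { eapply D_eqv. apply D_plus. apply (D_mult (fun t => t) (fun _ => xi)). apply D_id. apply D_const.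
    apply D_const. ring. }
  split; simpl.
  - eapply D_eqv. apply (D_cos (fun t => t * xi + y * eta)); eauto. ring.
  - eapply D_eqv. apply (D_sin (fun t => t * xi + y * eta)); eauto. ring.
Qed.
Lemma cdl_Ey xi eta x t0 : cdl (fun t => Ef xi eta x t) t0 (Cmul (0, eta) (Ef xi eta x t0)).
Proof. assert (H : derivable_pt_lim (fun t => x * xi + t * eta) t0 eta).
  { eapply D_eqv. apply D_plus. apply D_const. apply (D_mult (fun t => t) (fun _ => eta)). apply D_id. apply D_const.
    ring. }
  split; simpl.
  - eapply D_eqv. apply (D_cos (fun t => x * xi + t * eta)); eauto. ring.
  - eapply D_eqv. apply (D_sin (fun t => x * xi + t * eta)); eauto. ring.
Qed.

Definition Gf al be ga de xi eta (L : list mono) : Fn :=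
  fun x y => Cmul (EvC L (al*eta - be*x) (ga*xi - de*y)) (Ef xi eta x y).
Definition Pl (al de : R) L := mulU L ++ scl (0, al*de) (dV L).
Definition Ql (be ga : R) L := mulV L ++ scl (0, be*ga) (dU L).

Lemma Pstep al be ga de xi eta L :
  Pop al be (Gf al be ga de xi eta L) = Gf al be ga de xi eta (Pl al de L).
Proof. apply functional_extensionality; intro x; apply functional_extensionality; intro y.
  unfold Pop, Dy, Mx, pdy, Gf.
  rewrite (cdl_cderiv _ _ _ (cdl_mul _ _ _ _ _
     (cdl_EvC_v L (fun t => ga*xi - de*t) (al*eta - be*x) y _ (D_lin2 _ _ _)) (cdl_Ey xi eta x y))).
  unfold Pl. rewrite EvC_app, EvC_scl, EvC_mulU. cxs.
Qed.
Lemma Qstep al be ga de xi eta L :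
  Qop ga de (Gf al be ga de xi eta L) = Gf al be ga de xi eta (Ql be ga L).
Proof. apply functional_extensionality; intro x; apply functional_extensionality; intro y.
  unfold Qop, Dx, My, pdx, Gf.
  rewrite (cdl_cderiv _ _ _ (cdl_mul _ _ _ _ _
     (cdl_EvC_u L (fun t => al*eta - be*t) (ga*xi - de*y) x _ (D_lin2 _ _ _)) (cdl_Ex xi eta y x))).
  unfold Ql. rewrite EvC_app, EvC_scl, EvC_mulV. cxs.
Qed.
Lemma Piter al be ga de xi eta L j :
  Nat.iter j (Pop al be) (Gf al be ga de xi eta L) = Gf al be ga de xi eta (Nat.iter j (Pl al de) L).
Proof. induction j; simpl; auto. rewrite IHj. apply Pstep. Qed.
Lemma Qiter al be ga de xi eta L k :
  Nat.iter k (Qop ga de) (Gf al be ga de xi eta L) = Gf al be ga de xi eta (Nat.iter k (Ql be ga) L).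
Proof. induction k; simpl; auto. rewrite IHk. apply Qstep. Qed.

Definition L0 : list mono := ((1,0), 0%nat, 0%nat) :: nil.
Lemma Ef_G al be ga de xi eta : Ef xi eta = Gf al be ga de xi eta L0.
Proof. apply functional_extensionality; intro x; apply functional_extensionality; intro y.
  unfold Gf, L0; simpl. cxs. Qed.


Lemma cdl_scalK K g t l : cdl g t l -> cdl (fun s => Cmul K (g s)) t (Cmul K l).
Proof. intros H. eapply cdl_eqv. apply cdl_mul. apply cdl_const. exact H. cxs. Qed.

Lemma pdx_K xi eta K : pdx (fun x y => Cmul K (Ef xi eta x y)) = fun x y => Cmul (Cmul (0,xi) K) (Ef xi eta x y).
Proof. apply functional_extensionality; intro x; apply functional_extensionality; intro y.
  unfold pdx. rewrite (cdl_cderiv _ _ _ (cdl_scalK K _ _ _ (cdl_Ex xi eta y x))). cxs. Qed.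
Lemma pdy_K xi eta K : pdy (fun x y => Cmul K (Ef xi eta x y)) = fun x y => Cmul (Cmul (0,eta) K) (Ef xi eta x y).
Proof. apply functional_extensionality; intro x; apply functional_extensionality; intro y.
  unfold pdy. rewrite (cdl_cderiv _ _ _ (cdl_scalK K _ _ _ (cdl_Ey xi eta x y))). cxs. Qed.

Lemma Ef_K xi eta : Ef xi eta = fun x y => Cmul (1,0) (Ef xi eta x y).
Proof. apply functional_extensionality; intro x; apply functional_extensionality; intro y. cxs. Qed.

Lemma smooth_Ef xi eta : smooth (Ef xi eta).
Proof.
  assert (H : forall w, exists K, iter_pd w (Ef xi eta) = fun x y => Cmul K (Ef xi eta x y)).
  { induction w as [|b w [K IH]]; simpl.
    - exists (1,0). apply Ef_K.
    - rewrite IH. destruct b; [exists (Cmul (0,xi) K); apply pdx_K | exists (Cmul (0,eta) K); apply pdy_K]. }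
  intros w x y. destruct (H w) as [K HK]. rewrite HK. split.
  - eapply cdl_cderivable. apply (cdl_scalK K _ _ _ (cdl_Ex xi eta y x)).
  - eapply cdl_cderivable. apply (cdl_scalK K _ _ _ (cdl_Ey xi eta x y)).
Qed.

Lemma Dx_K xi eta K : Dx (fun x y => Cmul K (Ef xi eta x y)) = fun x y => Cmul (Cmul (CR xi) K) (Ef xi eta x y).
Proof. unfold Dx. rewrite pdx_K. apply functional_extensionality; intro x; apply functional_extensionality; intro y. cxs. Qed.
Lemma Dy_K xi eta K : Dy (fun x y => Cmul K (Ef xi eta x y)) = fun x y => Cmul (Cmul (CR eta) K) (Ef xi eta x y).
Proof. unfold Dy. rewrite pdy_K. apply functional_extensionality; intro x; apply functional_extensionality; intro y. cxs. Qed.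
Lemma Dx_iter xi eta K r : Nat.iter r Dx (fun x y => Cmul K (Ef xi eta x y)) =
  fun x y => Cmul (Cmul (CR (xi ^ r)) K) (Ef xi eta x y).
Proof. induction r; simpl.
  - apply functional_extensionality; intro x; apply functional_extensionality; intro y. cxs.
  - rewrite IHr, Dx_K. apply functional_extensionality; intro x; apply functional_extensionality; intro y. cxs.
Qed.
Lemma Dy_iter xi eta K r : Nat.iter r Dy (fun x y => Cmul K (Ef xi eta x y)) =
  fun x y => Cmul (Cmul (CR (eta ^ r)) K) (Ef xi eta x y).
Proof. induction r; simpl.
  - apply functional_extensionality; intro x; apply functional_extensionality; intro y. cxs.
  - rewrite IHr, Dy_K. apply functional_extensionality; intro x; apply functional_extensionality; intro y. cxs.
Qed.

Lemma sumC_ext n f g : (forall i, (i < n)%nat -> f i = g i) -> sumC n f = sumC n g.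
Proof. induction n; simpl; intros; auto. rewrite IHn by (intros; apply H; lia). rewrite H by lia. auto. Qed.
Lemma sumC_mul_r n g z : sumC n (fun i => Cmul (g i) z) = Cmul (sumC n g) z.
Proof. induction n; simpl. cxs. rewrite IHn. cxs. Qed.
Lemma sum4_mul_r N g z : sum4 N (fun p q r s => Cmul (g p q r s) z) = Cmul (sum4 N g) z.
Proof. unfold sum4. rewrite <- sumC_mul_r. apply sumC_ext; intros.
  rewrite <- sumC_mul_r. apply sumC_ext; intros.
  rewrite <- sumC_mul_r. apply sumC_ext; intros.
  rewrite <- sumC_mul_r. auto. Qed.

Lemma polyop_Ef N c xi eta x y :
  polyop N c (Ef xi eta) x y = Cmul (symbol N c x y xi eta) (Ef xi eta x y).
Proof. unfold polyop, symbol. rewrite <- sum4_mul_r. unfold sum4.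
  apply sumC_ext; intros p _. apply sumC_ext; intros q _. apply sumC_ext; intros r _. apply sumC_ext; intros s _.
  rewrite (Ef_K xi eta) at 1. rewrite Dy_iter, Dx_iter. cxs. Qed.

Fixpoint sumL (n : nat) (g : nat -> list mono) : list mono :=
  match n with O => nil | S n' => sumL n' g ++ g n' end.
Lemma EvC_sumL n g u v : EvC (sumL n g) u v = sumC n (fun i => EvC (g i) u v).
Proof. induction n; simpl; auto. rewrite EvC_app, IHn. auto. Qed.

Definition Ftot al be ga de (a : nat -> nat -> Cx) m :=
  sumL (S m) (fun j => sumL (S (m - j)) (fun k =>
    scl (Cmul (CR ((-1) ^ (j + k))) (a k j)) (Nat.iter j (Pl al de) (Nat.iter k (Ql be ga) L0)))).

Lemma twisted_Ef al be ga de a m xi eta x y :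
  twisted al be ga de a m (Ef xi eta) x y =
  Cmul (EvC (Ftot al be ga de a m) (al*eta - be*x) (ga*xi - de*y)) (Ef xi eta x y).
Proof. unfold twisted, Ftot. rewrite EvC_sumL, <- sumC_mul_r.
  apply sumC_ext; intros j _. rewrite EvC_sumL, <- sumC_mul_r. apply sumC_ext; intros k _.
  rewrite (Ef_G al be ga de xi eta) at 1. rewrite Qiter, Piter. unfold Gf. rewrite EvC_scl. cxs. Qed.


Fixpoint sumR (n : nat) (g : nat -> R) : R := match n with O => 0 | S n' => sumR n' g + g n' end.
Lemma sumR_ext n f g : (forall i, (i < n)%nat -> f i = g i) -> sumR n f = sumR n g.
Proof. induction n; simpl; intros; auto. rewrite IHn by (intros; apply H; lia). rewrite H by lia. auto. Qed.
Lemma sumR_mul_r n g z : sumR n (fun i => g i * z) = sumR n g * z.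
Proof. induction n; simpl. ring. rewrite IHn. ring. Qed.
Lemma sumR_shift n f : sumR (S n) f = f 0%nat + sumR n (fun i => f (S i)).
Proof. induction n; simpl in *. ring. rewrite IHn. ring. Qed.
Lemma pow_le1 t d : 0 <= t <= 1 -> 0 <= t ^ d <= 1.
Proof. intros H; induction d; simpl; nra. Qed.
Lemma sumR_bound n b t : 0 <= t <= 1 ->
  Rabs (sumR n (fun d => b d * t ^ d)) <= sumR n (fun d => Rabs (b d)).
Proof. intros Ht; induction n; simpl. rewrite Rabs_R0; lra.
  eapply Rle_trans. apply Rabs_triang. rewrite Rabs_mult.
  pose proof (pow_le1 t n Ht). rewrite (Rabs_right (t ^ n)) by lra.
  pose proof (Rabs_pos (b n)). nra. Qed.

Lemma poly1 n : forall b, (forall t, 0 < t <= 1 -> sumR n (fun d => b d * t ^ d) = 0) ->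
  forall d, (d < n)%nat -> b d = 0.
Proof. induction n; intros b H d Hd. lia.
  assert (H' : forall t, 0 < t <= 1 -> b 0%nat + t * sumR n (fun d => b (S d) * t ^ d) = 0).
  { intros t Ht. rewrite <- (H t Ht). rewrite sumR_shift. simpl. rewrite Rmult_1_r. f_equal.
    rewrite Rmult_comm, <- sumR_mul_r. apply sumR_ext; intros; simpl; ring. }
  assert (Hb0 : b 0%nat = 0).
  { destruct (Req_dec (b 0%nat) 0) as [|Hne]; auto. exfalso.
    set (A := Rabs (b 0%nat)). set (M := sumR n (fun d => Rabs (b (S d)))).
    assert (HA : 0 < A) by (apply Rabs_pos_lt; auto).
    assert (HM : 0 <= M) by (eapply Rle_trans; [apply Rabs_pos|apply (sumR_bound n (fun d => b (S d)) 1); lra]).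
    set (t := A / (A + M + 1)).
    assert (Ht1 : t * (A + M + 1) = A) by (unfold t; field; lra).
    assert (Ht : 0 < t <= 1).
    { split. unfold t; apply Rdiv_lt_0_compat; lra. apply Rmult_le_reg_r with (A + M + 1). lra.
      rewrite Ht1. lra. }
    pose proof (H' t Ht) as E. pose proof (sumR_bound n (fun d => b (S d)) t ltac:(lra)) as Bd.
    cbv beta in Bd; fold M in Bd.
    assert (Rabs (b 0%nat) = Rabs (t * sumR n (fun d => b (S d) * t ^ d))).
    { replace (b 0%nat) with (- (t * sumR n (fun d => b (S d) * t ^ d))) by lra. apply Rabs_Ropp. }
    rewrite Rabs_mult, (Rabs_right t) in H0 by lra. fold A in H0.
    assert (t * Rabs (sumR n (fun d => b (S d) * t ^ d)) <= t * M) by (apply Rmult_le_compat_l; lra).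
    nra. }
  destruct d. auto.
  apply (IHn (fun d => b (S d))). intros t Ht. pose proof (H' t Ht). rewrite Hb0 in H0.
  destruct (Rmult_integral _ _ (eq_trans (eq_sym (Rplus_0_l _)) H0)); auto. lra. lia.
Qed.

Lemma poly2 n h : (forall u v, sumR n (fun d => sumR n (fun e => h d e * (u ^ d * v ^ e))) = 0) ->
  forall d e, (d < n)%nat -> (e < n)%nat -> h d e = 0.
Proof. intros H d e Hd He.
  assert (H1 : forall v d, (d < n)%nat -> sumR n (fun e => h d e * v ^ e) = 0).
  { intros v. apply poly1. intros u _. rewrite <- (H u v). apply sumR_ext; intros.
    rewrite <- sumR_mul_r. apply sumR_ext; intros; ring. }
  apply (poly1 n (fun e => h d e)); auto.
Qed.


Fixpoint coef (L : list mono) (d e : nat) : Cx :=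
  match L with nil => C0 | t :: L' =>
    Cadd (if andb (Nat.eqb (snd (fst t)) d) (Nat.eqb (snd t) e) then fst (fst t) else C0) (coef L' d e) end.

Lemma coef_app L1 L2 d e : coef (L1 ++ L2) d e = Cadd (coef L1 d e) (coef L2 d e).
Proof. induction L1; simpl. cxs. rewrite IHL1. cxs. Qed.
Lemma coef_scl k L d e : coef (scl k L) d e = Cmul k (coef L d e).
Proof. induction L; simpl. cxs. rewrite IHL. destruct (andb _ _); cxs. Qed.
Lemma coef_sumL n g d e : coef (sumL n g) d e = sumC n (fun i => coef (g i) d e).
Proof. induction n; simpl; auto. rewrite coef_app, IHn. auto. Qed.
Lemma coef_mulU L d e : coef (mulU L) d e = match d with O => C0 | S d' => coef L d' e end.
Proof. induction L as [|[[c d0] e0] L IH]; simpl. destruct d; auto.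
  fold (mulU L). rewrite IH. destruct d; simpl. cxs. destruct (andb _ _); auto. Qed.
Lemma coef_mulV L d e : coef (mulV L) d e = match e with O => C0 | S e' => coef L d e' end.
Proof. induction L as [|[[c d0] e0] L IH]; simpl. destruct e; auto.
  fold (mulV L). rewrite IH. destruct e; simpl. rewrite andb_false_r. cxs. destruct (andb _ _); auto. Qed.
Lemma coef_dU L d e : coef (dU L) d e = Cmul (CR (INR (S d))) (coef L (S d) e).
Proof. induction L as [|[[c d0] e0] L IH]; simpl. cxs.
  fold (dU L). rewrite IH. destruct d0 as [|d0]; simpl.
  - destruct (andb _ _); cxs.
  - destruct (Nat.eqb_spec d0 d); simpl; [subst; destruct (_ =? _)%nat|]; cxs.
Qed.
Lemma coef_dV L d e : coef (dV L) d e = Cmul (CR (INR (S e))) (coef L d (S e)).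
Proof. induction L as [|[[c d0] e0] L IH]; simpl. cxs.
  fold (dV L). rewrite IH. destruct e0 as [|e0]; simpl.
  - rewrite andb_false_r. destruct (andb _ _); cxs.
  - destruct (Nat.eqb_spec e0 e); simpl; [subst; destruct (_ =? _)%nat|]; rewrite ?andb_false_r, ?andb_true_r; cxs.
Qed.


Definition Bnd n (L : list mono) := Forall (fun t : mono => (snd (fst t) + snd t <= n)%nat) L.
Lemma Bnd_weak n n' L : (n <= n')%nat -> Bnd n L -> Bnd n' L.
Proof. intros H; apply Forall_impl; intros; lia. Qed.
Lemma Bnd_app n L1 L2 : Bnd n L1 -> Bnd n L2 -> Bnd n (L1 ++ L2).
Proof. intros; apply Forall_app; auto. Qed.
Lemma Bnd_mulU n L : Bnd n L -> Bnd (S n) (mulU L).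
Proof. intros H; unfold mulU, Bnd; apply Forall_map; eapply Forall_impl; [|exact H]; intros [[c d] e]; simpl; lia. Qed.
Lemma Bnd_mulV n L : Bnd n L -> Bnd (S n) (mulV L).
Proof. intros H; unfold mulV, Bnd; apply Forall_map; eapply Forall_impl; [|exact H]; intros [[c d] e]; simpl; lia. Qed.
Lemma Bnd_dU n L : Bnd n L -> Bnd n (dU L).
Proof. intros H; unfold dU, Bnd; apply Forall_map; eapply Forall_impl; [|exact H]; intros [[c d] e]; simpl; lia. Qed.
Lemma Bnd_dV n L : Bnd n L -> Bnd n (dV L).
Proof. intros H; unfold dV, Bnd; apply Forall_map; eapply Forall_impl; [|exact H]; intros [[c d] e]; simpl; lia. Qed.
Lemma Bnd_scl n k L : Bnd n L -> Bnd n (scl k L).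
Proof. intros H; unfold scl, Bnd; apply Forall_map; eapply Forall_impl; [|exact H]; intros [[c d] e]; simpl; lia. Qed.
Lemma Bnd_Pl n al de L : Bnd n L -> Bnd (S n) (Pl al de L).
Proof. intros; unfold Pl; apply Bnd_app. apply Bnd_mulU; auto. apply Bnd_scl, (Bnd_weak n); auto. apply Bnd_dV; auto. Qed.
Lemma Bnd_Ql n be ga L : Bnd n L -> Bnd (S n) (Ql be ga L).
Proof. intros; unfold Ql; apply Bnd_app. apply Bnd_mulV; auto. apply Bnd_scl, (Bnd_weak n); auto. apply Bnd_dU; auto. Qed.
Lemma Bnd_iter al be ga de j k : Bnd (j + k) (Nat.iter j (Pl al de) (Nat.iter k (Ql be ga) L0)).
Proof. induction j; simpl.
  - induction k; simpl. repeat constructor. apply Bnd_Ql; auto.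
  - apply Bnd_Pl; auto.
Qed.
Lemma Bnd_sumL b n g : (forall i, (i < n)%nat -> Bnd b (g i)) -> Bnd b (sumL n g).
Proof. induction n; simpl; intros. constructor. apply Bnd_app; auto. Qed.
Lemma Bnd_Ftot al be ga de a m : Bnd m (Ftot al be ga de a m).
Proof. unfold Ftot. apply Bnd_sumL; intros j Hj. apply Bnd_sumL; intros k Hk.
  apply Bnd_scl. eapply Bnd_weak; [|apply Bnd_iter]. lia. Qed.
Lemma coef_bnd n L d e : Bnd n L -> (n < d + e)%nat -> coef L d e = C0.
Proof. induction 1 as [|[[c d0] e0] L Hx HL IH]; simpl in *; intros; auto.
  rewrite IH by auto. destruct (Nat.eqb_spec d0 d), (Nat.eqb_spec e0 e); simpl; try lia; cxs. Qed.

Definition Top n J K L := (forall d e, (n < d + e)%nat -> coef L d e = C0) /\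
  (forall d e, (d + e = n)%nat -> coef L d e = if andb (Nat.eqb d J) (Nat.eqb e K) then (1,0) else C0).
Lemma Top_L0 : Top 0 0 0 L0.
Proof. split; intros d e H; simpl.
  - destruct d, e; simpl; try lia; cxs.
  - destruct d, e; simpl; try lia; cxs.
Qed.
Lemma Top_Pl n J K L al de : Top n J K L -> Top (S n) (S J) K (Pl al de L).
Proof. intros [H1 H2]; unfold Pl; split; intros d e H; rewrite coef_app, coef_scl, coef_mulU, coef_dV.
  - rewrite (H1 d (S e)) by lia. destruct d. cxs. rewrite H1 by lia. cxs.
  - rewrite (H1 d (S e)) by lia. destruct d. simpl. cxs. rewrite H2 by lia. simpl. destruct (andb _ _); cxs.
Qed.
Lemma Top_Ql n J K L be ga : Top n J K L -> Top (S n) J (S K) (Ql be ga L).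
Proof. intros [H1 H2]; unfold Ql; split; intros d e H; rewrite coef_app, coef_scl, coef_mulV, coef_dU.
  - rewrite (H1 (S d) e) by lia. destruct e. cxs. rewrite H1 by lia. cxs.
  - rewrite (H1 (S d) e) by lia. destruct e. simpl. rewrite andb_false_r. cxs.
    rewrite H2 by lia. simpl. destruct (andb _ _); cxs.
Qed.
Lemma Top_iter al be ga de j k : Top (j + k) j k (Nat.iter j (Pl al de) (Nat.iter k (Ql be ga) L0)).
Proof. induction j; simpl.
  - induction k; simpl. apply Top_L0. apply Top_Ql; auto.
  - apply Top_Pl; auto.
Qed.

Lemma sumC_zero n f : (forall i, (i < n)%nat -> f i = C0) -> sumC n f = C0.
Proof. induction n; simpl; intros; auto. rewrite IHn, H by (auto; lia). cxs. Qed.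
Lemma sumC_single n f i0 : (i0 < n)%nat -> (forall i, (i < n)%nat -> i <> i0 -> f i = C0) -> sumC n f = f i0.
Proof. induction n; simpl; intros. lia.
  destruct (Nat.eq_dec i0 n). subst. rewrite sumC_zero. cxs. intros; apply H0; lia.
  rewrite IHn by (auto; lia). rewrite (H0 n) by lia. cxs. Qed.
Lemma sumC_add n f g : sumC n (fun i => Cadd (f i) (g i)) = Cadd (sumC n f) (sumC n g).
Proof. induction n; simpl. cxs. rewrite IHn. cxs. Qed.

Lemma EvC_expand n L u v : Bnd n L ->
  EvC L u v = sumC (S n) (fun d => sumC (S n) (fun e => Cmul (coef L d e) (CR (u ^ d * v ^ e)))).
Proof. induction 1 as [|[[c d0] e0] L Hx HL IH]; [|simpl in Hx]; cbn [EvC coef fst snd].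
  - symmetry. apply sumC_zero; intros. apply sumC_zero; intros. cxs.
  - rewrite IH. clear IH.
    transitivity (Cadd (sumC (S n) (fun d => sumC (S n) (fun e =>
       Cmul (if andb (Nat.eqb d0 d) (Nat.eqb e0 e) then c else C0) (CR (u ^ d * v ^ e)))))
       (sumC (S n) (fun d => sumC (S n) (fun e => Cmul (coef L d e) (CR (u ^ d * v ^ e)))))).
    + f_equal. rewrite (sumC_single _ _ d0) by (try lia; intros; apply sumC_zero; intros;
        destruct (Nat.eqb_spec d0 i); try lia; simpl; cxs).
      rewrite (sumC_single _ _ e0) by (try lia; intros;
        destruct (Nat.eqb_spec e0 i); try lia; rewrite andb_false_r; cxs).
      rewrite !Nat.eqb_refl. simpl. auto.
    + rewrite <- sumC_add. apply sumC_ext; intros. rewrite <- sumC_add. apply sumC_ext; intros.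
      destruct (andb _ _); cxs.
Qed.

Lemma fst_sumC n g : fst (sumC n g) = sumR n (fun i => fst (g i)).
Proof. induction n; simpl; auto. rewrite IHn; auto. Qed.
Lemma snd_sumC n g : snd (sumC n g) = sumR n (fun i => snd (g i)).
Proof. induction n; simpl; auto. rewrite IHn; auto. Qed.

Lemma ident n L : Bnd n L -> (forall u v, EvC L u v = C0) -> forall d e, coef L d e = C0.
Proof. intros HB H d e. destruct (Nat.le_gt_cases (d + e) n) as [Hle|Hlt]; [|apply (coef_bnd n); auto].
  apply Cx_ext; simpl.
  - apply (poly2 (S n) (fun d e => fst (coef L d e))); try lia. intros u v.
    pose proof (f_equal fst (H u v)) as E. rewrite (EvC_expand n) in E by auto. rewrite fst_sumC in E.
    transitivity (fst C0); [|reflexivity]. rewrite <- E. apply sumR_ext; intros. rewrite fst_sumC. apply sumR_ext; intros. simpl. ring.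
  - apply (poly2 (S n) (fun d e => snd (coef L d e))); try lia. intros u v.
    pose proof (f_equal snd (H u v)) as E. rewrite (EvC_expand n) in E by auto. rewrite snd_sumC in E.
    transitivity (snd C0); [|reflexivity]. rewrite <- E. apply sumR_ext; intros. rewrite snd_sumC. apply sumR_ext; intros. simpl. ring.
Qed.


Lemma Cx_nz_pos (a : Cx) : a <> C0 -> 0 < fst a ^ 2 + snd a ^ 2.
Proof. destruct a as [a1 a2]; simpl; intros H.
  destruct (Req_dec a1 0), (Req_dec a2 0); subst; try nra. exfalso; apply H; reflexivity. Qed.
Lemma Cnorm_div_pos a b : a <> C0 -> b <> C0 -> 0 < Cnorm (Cdiv a b).
Proof. intros Ha Hb. pose proof (Cx_nz_pos a Ha). pose proof (Cx_nz_pos b Hb).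
  unfold Cnorm. apply sqrt_lt_R0. destruct a as [a1 a2], b as [b1 b2]; simpl in *.
  unfold Cdiv, Cmul, Cinv; simpl.
  replace ((a1 * (b1 / (b1 * (b1 * 1) + b2 * (b2 * 1))) - a2 * (- b2 / (b1 * (b1 * 1) + b2 * (b2 * 1)))) *
    ((a1 * (b1 / (b1 * (b1 * 1) + b2 * (b2 * 1))) - a2 * (- b2 / (b1 * (b1 * 1) + b2 * (b2 * 1)))) * 1) +
    (a1 * (- b2 / (b1 * (b1 * 1) + b2 * (b2 * 1))) + a2 * (b1 / (b1 * (b1 * 1) + b2 * (b2 * 1)))) *
    ((a1 * (- b2 / (b1 * (b1 * 1) + b2 * (b2 * 1))) + a2 * (b1 / (b1 * (b1 * 1) + b2 * (b2 * 1)))) * 1))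
   with ((a1 * (a1 * 1) + a2 * (a2 * 1)) / (b1 * (b1 * 1) + b2 * (b2 * 1))).
  apply Rdiv_lt_0_compat; lra. field. lra.
Qed.
Lemma CmulR_zero r z : Cmul (CR r) z = C0 -> r <> 0 -> z = C0.
Proof. destruct z as [z1 z2]; unfold Cmul, CR, C0; simpl; intros H Hr. injection H; intros.
  assert (z1 = 0) by (apply (Rmult_integral r z1) in H1 || idtac; nra).
  assert (z2 = 0) by nra. subst; auto. Qed.
Lemma Cmul_cancel a b z : Cmul a z = Cmul b z -> fst z ^ 2 + snd z ^ 2 = 1 -> a = b.
Proof. intros H Hz. assert (E : forall w, Cmul (Cmul w z) (fst z, - snd z) = Cmul w (CR (fst z ^ 2 + snd z ^ 2))).
  { intros; cxs. }
  pose proof (E a) as Ea. pose proof (E b) as Eb. rewrite H, Hz in Ea. rewrite Hz in Eb.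
  rewrite Ea in Eb. apply Cx_ext; [apply (f_equal fst) in Eb|apply (f_equal snd) in Eb]; simpl in Eb; lra.
Qed.


Lemma point al be ga de u0 v0 B : be <> 0 -> de <> 0 -> exists x y xi eta,
  nrm4 x y xi eta > B /\ al * eta - be * x = u0 /\ ga * xi - de * y = v0.
Proof. intros Hb Hd. set (t := Rabs B + 1).
  exists ((al * t - u0) / be), (- v0 / de), 0, t. split; [|split].
  - unfold nrm4. assert (sqrt (0 ^ 2 + t ^ 2) = t).
    { replace (0 ^ 2 + t ^ 2) with (t ^ 2) by ring. apply sqrt_pow2. unfold t; pose proof (Rabs_pos B); lra. }
    rewrite H. pose proof (sqrt_pos (((al * t - u0) / be) ^ 2 + (- v0 / de) ^ 2)).
    assert (t > B) by (unfold t; pose proof (Rle_abs B); lra). lra.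
  - field; auto.
  - field; auto.
Qed.

Lemma Ef_norm xi eta x y : fst (Ef xi eta x y) ^ 2 + snd (Ef xi eta x y) ^ 2 = 1.
Proof. unfold Ef; simpl. pose proof (sin2_cos2 (x * xi + y * eta)). unfold Rsqr in H. lra. Qed.

Theorem proposition3p1 (al be ga de : R) (a : nat -> nat -> Cx) (m : nat) :
  twisted_data al be ga de a m -> (1 <= m)%nat ->
  forall (N : nat) (c : nat -> nat -> nat -> nat -> Cx),
    (forall f : Fn, smooth f ->
       forall x y : R, twisted al be ga de a m f x y = polyop N c f x y) ->
    ~ glob_hypoell (symbol N c).
Proof.
  intros [Hdet [Hbd [j0 [Hj0 Ha]]]] Hm N c Hop [[R0 HR0] Hd].
  assert (Hb : be <> 0) by (intro; apply Hbd; subst; ring).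
  assert (Hde : de <> 0) by (intro; apply Hbd; subst; ring).
  set (F := Ftot al be ga de a m).
  assert (Hsym : symbol N c = fun x y xi eta => EvC F (al * eta - be * x) (ga * xi - de * y)).
  { apply functional_extensionality; intro x0; apply functional_extensionality; intro y0;
    apply functional_extensionality; intro xi; apply functional_extensionality; intro eta.
    pose proof (Hop (Ef xi eta) (smooth_Ef xi eta) x0 y0) as E.
    rewrite twisted_Ef, polyop_Ef in E. symmetry. eapply Cmul_cancel. exact E. apply Ef_norm. }
  rewrite Hsym in HR0, Hd.
  assert (Hnz : forall u v, EvC F u v <> C0).
  { intros u v. destruct (point al be ga de u v R0 Hb Hde) as (x & y & xi & eta & Hn & Hu & Hv).
    pose proof (HR0 x y xi eta Hn). rewrite Hu, Hv in H. auto. }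
  assert (HU : forall u v, EvC (dU F) u v = C0).
  { intros u v. apply NNPP; intro Hz.
    set (z := Cmul (CR (- be)) (EvC (dU F) u v)).
    assert (Hz' : z <> C0). { intro E. apply Hz. apply (CmulR_zero (- be)); auto. lra. }
    pose proof (Cnorm_div_pos z (EvC F u v) Hz' (Hnz u v)) as Hpos.
    destruct (Hd pd1 (or_introl eq_refl) _ Hpos) as [R1 HR1].
    destruct (point al be ga de u v R1 Hb Hde) as (x & y & xi & eta & Hn & Hu & Hv).
    pose proof (HR1 x y xi eta Hn) as Hlt.
    unfold pd1 in Hlt.
    rewrite (cdl_cderiv _ _ _ (cdl_EvC_u F (fun t => al * eta - be * t) (ga * xi - de * y) x _ (D_lin2 _ _ _))) in Hlt.
    rewrite Hu, Hv in Hlt. fold z in Hlt. lra. }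
  assert (HV : forall u v, EvC (dV F) u v = C0).
  { intros u v. apply NNPP; intro Hz.
    set (z := Cmul (CR (- de)) (EvC (dV F) u v)).
    assert (Hz' : z <> C0). { intro E. apply Hz. apply (CmulR_zero (- de)); auto. lra. }
    pose proof (Cnorm_div_pos z (EvC F u v) Hz' (Hnz u v)) as Hpos.
    destruct (Hd pd2 (or_intror (or_introl eq_refl)) _ Hpos) as [R1 HR1].
    destruct (point al be ga de u v R1 Hb Hde) as (x & y & xi & eta & Hn & Hu & Hv).
    pose proof (HR1 x y xi eta Hn) as Hlt.
    unfold pd2 in Hlt.
    rewrite (cdl_cderiv _ _ _ (cdl_EvC_v F (fun t => ga * xi - de * t) (al * eta - be * x) y _ (D_lin2 _ _ _))) in Hlt.
    rewrite Hu, Hv in Hlt. fold z in Hlt. lra. }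
  assert (BF : Bnd m F) by apply Bnd_Ftot.
  assert (CU : forall d e, coef F (S d) e = C0).
  { intros d e. pose proof (ident m (dU F) (Bnd_dU _ _ BF) HU d e) as E. rewrite coef_dU in E.
    apply (CmulR_zero _ _ E). apply not_0_INR. lia. }
  assert (CV : forall d e, coef F d (S e) = C0).
  { intros d e. pose proof (ident m (dV F) (Bnd_dV _ _ BF) HV d e) as E. rewrite coef_dV in E.
    apply (CmulR_zero _ _ E). apply not_0_INR. lia. }
  assert (Hc0 : coef F j0 (m - j0) = C0).
  { destruct j0. destruct m. lia. replace (S m - 0)%nat with (S m) by lia. apply CV. apply CU. }
  assert (Htop : coef F j0 (m - j0) = Cmul (Cmul (CR ((-1) ^ (j0 + (m - j0)))) (a (m - j0)%nat j0)) (1, 0)).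
  { unfold F, Ftot. rewrite coef_sumL.
    assert (HT : forall j k, (j + k <= m)%nat -> coef (Nat.iter j (Pl al de) (Nat.iter k (Ql be ga) L0)) j0 (m - j0)
                   = if andb (Nat.eqb j0 j) (Nat.eqb (m - j0) k) then (1,0) else C0).
    { intros j k Hjk. destruct (Top_iter al be ga de j k) as [T1 T2].
      destruct (Nat.eq_dec (j + k) m).
      - apply T2. lia.
      - rewrite T1 by lia. destruct (Nat.eqb_spec j0 j), (Nat.eqb_spec (m - j0) k); simpl; auto; lia. }
    rewrite (sumC_single _ _ j0).
    - rewrite coef_sumL. rewrite (sumC_single _ _ (m - j0)).
      + rewrite coef_scl, HT by lia. rewrite !Nat.eqb_refl. reflexivity.
      + lia.
      + intros k Hk Hne. rewrite coef_scl, HT by lia.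
        destruct (Nat.eqb_spec (m - j0) k); try lia. rewrite andb_false_r. cxs.
    - lia.
    - intros j Hj Hne. rewrite coef_sumL. apply sumC_zero. intros k Hk. rewrite coef_scl, HT by lia.
      destruct (Nat.eqb_spec j0 j); try lia. simpl. cxs. }
  rewrite Hc0 in Htop. apply Ha. symmetry in Htop.
  apply (CmulR_zero ((-1) ^ (j0 + (m - j0)))). 
  - rewrite <- Htop. cxs.
  - apply pow_nonzero. lra.
Qed.
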